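(* Under the standing assumptions, let $\lambda_*>0$. Then $J(u)\ge\lambda_*H(u)$ for all $u\in X$ if and only if $J^*(\zeta)\le\lambda_*^{1-q}H^*(\zeta)$ for all $\zeta\in X^*$. Moreover, if $u_*$ is a $p$-eigenvector of $J$ with subgradient $\zeta_*$ and eigenvalue $\lambda_*=\min_{u\ne0}R(u)$, then $R_*(\zeta_* )=\lambda_*^{1-q}=\max_{\zeta\ne0}R_*(\zeta)$, so both bounds are sharp.
   Context: Standing assumptions: $X$ is a real reflexive Banach space with dual $X^*$ and duality pairing $\langle\cdot,\cdot\rangle$; $\Gamma_0(X)$ is the class of proper, lower semi-continuous, convex functionals $X\to\mathbb{R}\cup\{+\infty\}$. Fix $1<p<\infty$ and $q=\frac{p}{p-1}$. Let $J\in\Gamma_0(X)$, and let $H\in\Gamma_0(X)$ be absolutely $p$-homogeneous ($H(tu)=|t|^pH(u)$) such that $|u|_H:=(pH(u))^{1/p}$ is a norm on $X$, so $H(u)=\frac1p|u|_H^p$. The dual norm is $|\zeta|_{H^*}=\sup_{u\ne0}\langle\zeta,u\rangle/|u|_H$, and $H^*(\zeta)=\frac1q|\zeta|_{H^*}^q$. The Fenchel conjugate is $J^*(\zeta)=\sup_{u\in X}\langle\zeta,u\rangle-J(u)$ and the subdifferential is $\partial J(u)=\{\zeta\in X^*:\ J(u)+\langle\zeta,v-u\rangle\le J(v)\ \forall v\in X\}$. Growth assumption: there is $c>0$ with $H(u)\le cJ(u)$ for all $u\in X$. The Rayleigh quotient is $R(u)=J(u)/H(u)$ for $u\ne0$ and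 the dual Rayleigh quotient is $R_*(\zeta)=J^*(\zeta)/H^*(\zeta)$ for $\zeta\ne0$. A $p$-eigenvector of $J$: $u\in X\setminus\{0\}$ with subgradient $\zeta\in\partial J(u)$ and eigenvalue $\lambda=R(u)\in\mathbb{R}$ such that $\zeta\in\lambda\,\partial H(u)$. *)

(* Defs.v *)
From HB Require Import structures.
From mathcomp Require Import all_boot all_order all_algebra.
From mathcomp Require Import all_classical all_reals all_analysis.
Set Implicit Arguments. Unset Strict Implicit. Unset Printing Implicit Defensive.
Import Order.TTheory GRing.Theory Num.Theory.
Import numFieldNormedType.Exports.
Local Open Scope classical_set_scope.
Local Open Scope ring_scope.

Section Defs.
Context {R : realType} {X : normedModType R}.

(* Elements of the topological dual X^* : continuous linear functionals.
   The duality pairing <z,u> is the application z u. *)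
Definition is_dual (z : X -> R) : Prop :=
  (forall (a : R) (u v : X), z (a *: u + v) = a * z u + z v) /\ continuous z.

Definition dual_bounded_by (z : X -> R) (M : R) : Prop :=
  forall u : X, `|z u| <= M * `|u|.

Definition reflexive_space : Prop :=
  forall phi : (X -> R) -> R,
    (forall (a : R) (z1 z2 : X -> R), is_dual z1 -> is_dual z2 ->
       phi (fun u => a * z1 u + z2 u) = a * phi z1 + phi z2) ->
    (exists C : R, forall (z : X -> R) (M : R), is_dual z -> 0 <= M ->
       dual_bounded_by z M -> `|phi z| <= C * M) ->
    exists x : X, forall z, is_dual z -> phi z = z x.

Local Open Scope ereal_scope.

Definition proper_fun (J : X -> \bar R) : Prop :=
  (exists u, J u < +oo) /\ (forall u, -oo < J u).

Definition convex_efun (J : X -> \bar R) : Prop :=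
  forall (u v : X) (t : R), (0 <= t <= 1)%R ->
    J (t *: u + (1 - t) *: v)%R <= t%:E * J u + (1 - t)%:E * J v.

Definition Gamma0 (J : X -> \bar R) : Prop :=
  proper_fun J /\ lower_semicontinuous J /\ convex_efun J.

Definition fenchel (J : X -> \bar R) (z : X -> R) : \bar R :=
  ereal_sup (range (fun u => (z u)%:E - J u)).

Definition subdiff (J : X -> \bar R) (u : X) (z : X -> R) : Prop :=
  is_dual z /\ forall v : X, J u + (z v - z u)%:E <= J v.

Definition abs_p_homogeneous (p : R) (H : X -> \bar R) : Prop :=
  forall (t : R) (u : X), H (t *: u)%R = (`|t| `^ p)%:E * H u.

Definition Hnorm (p : R) (H : X -> \bar R) (u : X) : R :=
  ((p * fine (H u)) `^ p^-1)%R.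

Definition is_norm (N : X -> R) : Prop :=
  (forall u, N u = 0%R -> u = 0%R) /\
  (forall (a : R) u, N (a *: u)%R = (`|a| * N u)%R) /\
  (forall u v, (N (u + v)%R <= N u + N v)%R).

Definition rayleigh (J H : X -> \bar R) (u : X) : \bar R :=
  J u * ((fine (H u))^-1)%:E.

Definition dual_rayleigh (J H : X -> \bar R) (z : X -> R) : \bar R :=
  fenchel J z * inve (fenchel H z).

Definition p_eigenvector (J H : X -> \bar R) (u : X) (z : X -> R) (lam : R)
  : Prop :=
  u <> 0%R /\ subdiff J u z /\ rayleigh J H u = lam%:E /\
  exists eta : X -> R, subdiff H u eta /\ forall v, z v = (lam * eta v)%R.

End Defs.

(* Main.v *)
Require Import Defs.
From HB Require Import structures.
From mathcomp Require Import all_boot all_order all_algebra.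
From mathcomp Require Import all_classical all_reals all_analysis.
From mathcomp Require Import ring lra.
Import Order.TTheory GRing.Theory Num.Theory.
Import numFieldNormedType.Exports.
Set Implicit Arguments. Unset Strict Implicit. Unset Printing Implicit Defensive.
Local Open Scope classical_set_scope.
Local Open Scope ring_scope.

Section HahnBanach.
Context {R : realType} {X : lmodType R}.
Variable N : X -> R.
Hypothesis NZ : forall (a : R) u, N (a *: u) = `|a| * N u.
Hypothesis ND : forall u v, N (u + v) <= N u + N v.

Lemma N0 : N 0 = 0.
Proof. by rewrite -(scale0r (0 : X)) NZ normr0 mul0r. Qed.

Lemma Nge0 u : 0 <= N u.
Proof.
have := ND u (-u); rewrite addrN N0 -scaleN1r NZ normrN normr1 mul1r.
move=> h; have : 0 <= N u + N u by []. lra.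
Qed.

Definition linG (G : set (X * R)) :=
  forall (s : R) x a y b, G (x, a) -> G (y, b) -> G (s *: x + y, s * a + b).
Definition domG (G : set (X * R)) := forall x a, G (x, a) -> a <= N x.

Variable u : X.
Definition PG (G : set (X * R)) := [/\ G (u, N u), linG G & domG G].

Lemma PG_0 G : PG G -> G (0, 0).
Proof.
case=> Gu lG _; have := lG (-1) _ _ _ _ Gu Gu.
by rewrite scaleN1r addNr mulN1r addNr.
Qed.

Lemma PG_uniq G x a b : PG G -> G (x, a) -> G (x, b) -> a = b.
Proof.
move=> PGG ha hb; case: (PGG) => _ lG dG.
have h1 := dG _ _ (lG (-1) _ _ _ _ ha hb).
have h2 := dG _ _ (lG (-1) _ _ _ _ hb ha).
move: h1 h2; rewrite scaleN1r addNr N0 !mulN1r => h1 h2; lra.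
Qed.

Definition G0 : set (X * R) := fun xa => exists t : R, xa = (t *: u, t * N u).

Lemma PG_G0 : PG G0.
Proof.
split.
- by exists 1; rewrite scale1r mul1r.
- move=> s x a y b [t [-> ->]] [t' [-> ->]]; exists (s * t + t').
  by rewrite scalerDl scalerA mulrDl mulrA.
- move=> x a [t [-> ->]]; rewrite NZ ler_wpM2r ?Nge0 //; exact: ler_norm.
Qed.

Lemma PG_sub G : PG G -> G0 `<=` G.
Proof.
move=> PGG [x a] [t [-> ->]]; case: (PGG) => Gu lG _.
have := lG t _ _ _ _ Gu (PG_0 PGG); by rewrite addr0 addr0.
Qed.

Lemma extend G x0 : PG G -> ~ (exists a, G (x0, a)) ->
  exists G', [/\ PG G', G `<=` G' & exists c, G' (x0, c)].
Proof.
move=> PGG nx0; case: (PGG) => Gu lG dG.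
pose S : set R := fun r => exists y b, G (y, b) /\ r = b - N (y - x0).
have S0 : S (0 - N (0 - x0)) by exists 0, 0; split => //; exact: PG_0.
have Sub : forall x a, G (x, a) -> ubound S (N (x + x0) - a).
  move=> x a Gx r [y [b [Gy ->]]].
  have := dG _ _ (lG 1 _ _ _ _ Gx Gy); rewrite scale1r mul1r => h.
  have h2 : N (x + y) <= N (x + x0) + N (y - x0).
    by have := ND (x + x0) (y - x0); rewrite addrACA subrr addr0.
  lra.
have hS : has_ubound S by exists (N (0 + x0) - 0); exact: Sub (PG_0 PGG).
pose c := sup S.
have cle : forall x a, G (x, a) -> c <= N (x + x0) - a.
  move=> x a Gx; apply: ge_sup; [by exists (0 - N (0 - x0)) | exact: Sub].
have cge : forall y b, G (y, b) -> b - N (y - x0) <= c.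
  by move=> y b Gy; apply: ub_le_sup => //; exists y, b.
pose G' : set (X * R) := fun xa =>
  exists x a (t : R), G (x, a) /\ xa = (x + t *: x0, a + t * c).
exists G'; split.
- split.
  + by exists u, (N u), 0; rewrite scale0r mul0r !addr0.
  + move=> s x a y b [x1 [a1 [t1 [G1 [-> ->]]]]] [x2 [a2 [t2 [G2 [-> ->]]]]].
    exists (s *: x1 + x2), (s * a1 + a2), (s * t1 + t2); split; first exact: lG.
    congr pair.
      by rewrite scalerDr scalerDl scalerA !addrA; congr (_ + _); rewrite addrAC.
    by rewrite mulrDl mulrDr mulrA !addrA; congr (_ + _); rewrite addrAC.
  + move=> x' a' [x [a [t [Gx [-> ->]]]]].
    have [t0|t0|->] := ltgtP t 0; last by rewrite scale0r mul0r !addr0; exact: dG.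
    * pose s := - t; have s0 : 0 < s by rewrite /s oppr_gt0.
      have Gs : G (s^-1 *: x, s^-1 * a).
        by have := lG s^-1 _ _ _ _ Gx (PG_0 PGG); rewrite !addr0.
      have := cge _ _ Gs.
      have -> : s^-1 *: x - x0 = s^-1 *: (x + t *: x0).
        by rewrite scalerDr scalerA /s invrN mulNr mulVf ?lt_eqF // scaleN1r.
      rewrite NZ gtr0_norm ?invr_gt0 // => h.
      have : s * (s^-1 * a - s^-1 * N (x + t *: x0)) <= s * c.
        by rewrite ler_pM2l.
      rewrite mulrBr !mulrA mulfV ?gt_eqF // !mul1r /s => h2; lra.
    * have Gs : G (t^-1 *: x, t^-1 * a).
        by have := lG t^-1 _ _ _ _ Gx (PG_0 PGG); rewrite !addr0.
      have := cle _ _ Gs.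
      have -> : t^-1 *: x + x0 = t^-1 *: (x + t *: x0).
        by rewrite scalerDr scalerA mulVf ?gt_eqF // scale1r.
      rewrite NZ gtr0_norm ?invr_gt0 // => h.
      have : t * c <= t * (t^-1 * N (x + t *: x0) - t^-1 * a).
        by rewrite ler_pM2l.
      rewrite mulrBr !mulrA mulfV ?gt_eqF // !mul1r => h2; lra.
- by move=> [x a] Gx; exists x, a, 0; rewrite scale0r mul0r !addr0.
- exists c, 0, 0, 1; split; first exact: PG_0.
  by rewrite scale1r mul1r !add0r.
Qed.

Lemma hahn_banach : exists f : X -> R,
  [/\ forall (a : R) x y, f (a *: x + y) = a * f x + f y,
      f u = N u & forall x, f x <= N x].
Proof.
pose T := {G : set (X * R) | PG G}.
pose Rl := fun A B : T => `[< proj1_sig A `<=` proj1_sig B >].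
have t0 : T := exist _ G0 PG_G0.
have [[G PGG] maxG] : exists t, premaximal (fun x y => Rl x y) t.
  apply: (ZL_preorder t0).
  - by move=> t; apply/asboolP.
  - by move=> r s t /asboolP h1 /asboolP h2; apply/asboolP => z /h1 /h2.
  - move=> A totA.
    pose M : set (set (X * R)) := fun G => G = G0 \/ exists S, A S /\ G = proj1_sig S.
    have MP : forall G, M G -> PG G.
      by move=> G [->|[S [_ ->]]]; [exact: PG_G0 | exact: proj2_sig].
    have Mtot : forall G1 G2, M G1 -> M G2 -> G1 `<=` G2 \/ G2 `<=` G1.
      move=> G1 G2 [->|[S1 [A1 ->]]] h2.
        by left; apply: PG_sub; exact: MP.
      case: h2 => [->|[S2 [A2 ->]]]; first by right; apply: PG_sub; exact: proj2_sig.
      by case: (totA _ _ A1 A2) => /asboolP h; [left|right].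
    pose U : set (X * R) := fun xa => exists G, M G /\ G xa.
    have PU : PG U.
      split.
      + by exists G0; split; [left | exists 1; rewrite scale1r mul1r].
      + move=> s x a y b [G1 [M1 h1]] [G2 [M2 h2]].
        case: (Mtot _ _ M1 M2) => sub.
          by exists G2; split => //; case: (MP _ M2) => _ l _; apply: l => //; exact: sub.
        by exists G1; split => //; case: (MP _ M1) => _ l _; apply: l => //; exact: sub.
      + by move=> x a [G1 [M1 h1]]; case: (MP _ M1) => _ _ d; exact: d.
    exists (exist _ U PU) => S AS; apply/asboolP => xa Sxa /=.
    by exists (proj1_sig S); split => //; right; exists S.
have allx : forall x, exists a, G (x, a).
  move=> x; apply: contrapT => nx.
  have [G' [PG' sub [c Gc]]] := extend PGG nx.
  have /asboolP := maxG (exist _ G' PG') (asboolT sub) => /= sub'.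
  by apply: nx; exists c; exact: sub'.
have [f Hf] := choice allx.
case: (PGG) => Gu lG dG.
exists f; split.
- move=> a x y; apply: (PG_uniq PGG (Hf _)); exact: lG.
- exact: (PG_uniq PGG (Hf _) Gu).
- by move=> x; exact: dG.
Qed.

End HahnBanach.

Lemma final_alg (R : realType) (p lam n hu j : R) : 1 < p -> 0 < lam -> 0 <= n ->
  n `^ p = p * hu ->
  lam * n `^ (p - 1) * n - j <=
    lam `^ (1 - p / (p - 1)) * ((lam * n `^ (p - 1)) `^ (p / (p - 1)) / (p / (p - 1))) ->
  lam * hu <= j.
Proof.
move=> p1 l0 n0 np.
have e : (p - 1) * (p / (p - 1)) = p by field; lra.
rewrite powRM ?powR_ge0 ?(ltW l0) // -powRrM e.
rewrite -mulrA (mulrC (n `^ (p - 1))) mulr_powRB1 //; last lra.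
rewrite mulrA mulrA -powRD; last by apply/implyP => _; exact: lt0r_neq0.
rewrite subrK powRr1 ?(ltW l0) // np.
have -> : lam * (p * hu) / (p / (p - 1)) = lam * (p * hu) - lam * hu.
  by field; lra.
lra.
Qed.

Lemma alg_2a (R : realType) (p lam d : R) : 1 < p -> 0 < lam -> 0 < d ->
  lam * d * (lam `^ (p / (p - 1)) * d)^-1 = lam `^ (1 - p / (p - 1)).
Proof.
move=> p1 l0 d0.
rewrite powRB; last by apply/implyP => _; exact: lt0r_neq0.
rewrite powRr1 ?(ltW l0) //.
have : 0 < lam `^ (p / (p - 1)) by exact: powR_gt0.
move=> hq; field; apply/andP; split; exact: lt0r_neq0.
Qed.

Lemma alg_eta (R : realType) (c hu e : R) : 0 < hu -> c < 2^-1 ->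
  hu + (2^-1 * e - e) <= c * hu -> 0 < e - hu.
Proof.
move=> h0 c2 hh.
have : c * hu < 2^-1 * hu by rewrite ltr_pM2r.
lra.
Qed.

Lemma alg_qpow (R : realType) (p lam : R) : 1 < p -> 0 < lam ->
  lam * lam `^ (p - 1)^-1 = lam `^ (p / (p - 1)) /\
  (lam `^ (p - 1)^-1) `^ p = lam `^ (p / (p - 1)).
Proof.
move=> p1 l0; split.
  rewrite -{1}(powRr1 (ltW l0)) -powRD; last by apply/implyP => _; exact: lt0r_neq0.
  congr (_ `^ _); field; lra.
rewrite -powRrM; congr (_ `^ _); field; lra.
Qed.

Lemma alg_lin (R : realType) (a b c j : R) : a + (b - c) <= j -> b - j <= c - a.
Proof. move=> h; lra. Qed.

Section Cont.
Context {R : realType} {X : normedModType R}.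

Lemma lin0 (g : X -> R) : (forall (a : R) u v, g (a *: u + v) = a * g u + g v) -> g 0 = 0.
move=> lg; have := lg 1 0 0; rewrite scale1r addr0 mul1r => h; lra.


Qed.

Lemma linZ (g : X -> R) : (forall (a : R) u v, g (a *: u + v) = a * g u + g v) ->
  forall (a : R) u, g (a *: u) = a * g u.
Proof. by move=> lg a u; have := lg a u 0; rewrite addr0 lin0 // addr0. Qed.

Lemma linB (g : X -> R) : (forall (a : R) u v, g (a *: u + v) = a * g u + g v) ->
  forall u v, g (u - v) = g u - g v.
Proof.
move=> lg u v; have := lg (-1) v u; rewrite scaleN1r mulN1r => h.
by rewrite addrC h addrC.
Qed.

Lemma bounded_lin_dual (g : X -> R) (K : R) :
  (forall (a : R) u v, g (a *: u + v) = a * g u + g v) ->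
  0 <= K -> (forall x, `|g x| <= K * `|x|) -> is_dual g.
Proof.
move=> lg K0 bg; split => // x; apply/cvgrPdist_lt => e e0.
apply/nbhs_ballP; exists (e / (K + 1)); first by apply: divr_gt0 => //; lra.
move=> y; rewrite -ball_normE /= => hy.
rewrite -linB //; apply: (le_lt_trans (bg _)).
have : K * `|x - y| <= K * (e / (K + 1)) by rewrite ler_wpM2l // ltW.
move/le_lt_trans; apply.
have hK : K * (e / (K + 1)) = e * (K / (K + 1)) by rewrite mulrA [K * e]mulrC -mulrA.
rewrite hK; rewrite gtr_pMr // ltr_pdivrMr; lra.
Qed.

End Cont.

Section Hfacts.
Context {R : realType} {X : completeNormedModType R}.
Variables (p : R) (H : X -> \bar R).
Hypothesis p1 : 1 < p.
Hypothesis HG : Gamma0 H.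
Hypothesis Hhom : abs_p_homogeneous p H.
Hypothesis Hfin : forall u, H u \is a fin_num.
Hypothesis Hnrm : is_norm (Hnorm p H).


Lemma pgt0 : 0 < p. Proof. move: p1; lra. Qed.
Lemma pneq0 : p != 0. Proof. exact: lt0r_neq0 pgt0. Qed.

Lemma HE v : H v = (fine (H v))%:E.
Proof. by rewrite fineK. Qed.

Lemma hhom (t : R) v : fine (H (t *: v)) = `|t| `^ p * fine (H v).
Proof. by rewrite Hhom HE /=. Qed.

Lemma hN v : fine (H (- v)) = fine (H v).
Proof. by rewrite -scaleN1r hhom normrN normr1 powR1 mul1r. Qed.

Lemma h0 : fine (H 0) = 0.
Proof. by rewrite -(scale0r (0 : X)) hhom normr0 powR0 ?mul0r // pneq0. Qed.

Lemma hge0 v : 0 <= fine (H v).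
Proof.
case: HG => _ [_ cvx].
have := cvx v (- v) (2^-1) ltac:(apply/andP; split; lra).
have -> : (1 - 2^-1 : R) = 2^-1 by field.
rewrite scalerN subrr [H 0]HE h0 [H v]HE [H (- v)]HE hN -!EFinM -EFinD lee_fin /=.
lra.
Qed.

Lemma Hnorm_pow v : Hnorm p H v `^ p = p * fine (H v).
Proof.
rewrite /Hnorm -powRrM mulVf ?powRr1 ?pneq0 //.
by apply: mulr_ge0; [exact: ltW pgt0 | exact: hge0].
Qed.

Lemma hpos v : v != 0 -> 0 < fine (H v).
Proof.
move=> v0; rewrite lt_def hge0 andbT; apply/eqP => hv.
case: Hnrm => n0 _; move/eqP: v0; apply; apply: n0.
by rewrite /Hnorm hv mulr0 powR0 // invr_eq0 pneq0.
Qed.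

Lemma Hnorm_ge0 v : 0 <= Hnorm p H v.
Proof. exact: powR_ge0. Qed.

Lemma Hnorm_bound : exists K : R, 0 <= K /\ forall x, Hnorm p H x <= K * `|x|.
Proof.
case: HG => _ [/lower_semicontinuousP lsc cvx].
set O := fun n : nat => [set x | ((n%:R : R)%:E < H x)%E].
have Oo n : open (O n) by exact: lsc.
have ContraBaire : exists i, not (dense (O i)).
  apply: contrapT => hd.
  have dd : forall i, open (O i) /\ dense (O i).
    move=> i; split => //; apply: contrapT => nd; apply: hd; by exists i.
  have := Baire dd.
  have -> : \bigcap_i O i = set0.
    rewrite -subset0 => x Ox; have := Ox (Num.trunc `|fine (H x)|).+1 Logic.I.
    rewrite /O /= HE lte_fin => hlt.
    have := truncnS_gt `|fine (H x)|; have := ler_norm (fine (H x)); lra.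
  by move=> d0; have [y [_ []]] := d0 setT (ex_intro _ 0 Logic.I) openT.
have [n [x0 [r H1]]] :
    exists n x (r : {posnum R}), (ball x r%:num) `<=` (~` (O n)).
  move: ContraBaire =>
  [i /(denseNE) [ O0 [ [ x /open_nbhs_nbhs /nbhs_ballP [r r0 bxr]
   /((@subsetI_eq0 _ (ball x r) O0 (O i) (O i)))]]]] /(_ bxr) bxrOi.
  by exists i, x, (PosNum r0); apply/disjoints_subset/bxrOi.
have hb : forall y, ball x0 r%:num y -> fine (H y) <= n%:R.
  move=> y /H1; rewrite /O /= HE lte_fin => hy; rewrite leNgt; exact/negP.
have hw : forall w, `|w| < r%:num -> fine (H w) <= n%:R.
  move=> w wr.
  have b1 : ball x0 r%:num (x0 + w).
    by rewrite -ball_normE /ball_ /= opprD addrA subrr sub0r normrN.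
  have b2 : ball x0 r%:num (x0 - w).
    by rewrite -ball_normE /ball_ /= opprD addrA subrr sub0r opprK.
  have := cvx (x0 + w) (w - x0) (2^-1) ltac:(apply/andP; split; lra).
  have -> : (1 - 2^-1 : R) = 2^-1 by field.
  have -> : 2^-1 *: (x0 + w) + 2^-1 *: (w - x0) = w.
    rewrite -scalerDr (addrC (x0 + w)) addrA subrK -mulr2n -scalerMnr scalerMnl -mulr_natr mulVf ?scale1r // pnatr_eq0.

  rewrite [H w]HE [H (x0 + w)]HE [H (w - x0)]HE -EFinM -EFinM -EFinD lee_fin.
  have := hb _ b1; have := hb _ b2; rewrite -hN opprB; lra.
set M := (p * n%:R) `^ p^-1.
have hM : forall w, `|w| < r%:num -> Hnorm p H w <= M.
  move=> w /hw wn; apply: ge0_ler_powR.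
  - by rewrite invr_ge0 ltW // pgt0.
  - by rewrite nnegrE; apply: mulr_ge0; [exact: ltW pgt0 | exact: hge0].
  - by rewrite nnegrE; apply: mulr_ge0; [exact: ltW pgt0 | exact: ler0n].
  - by rewrite ler_pM2l // pgt0.
have M0 : 0 <= M by exact: powR_ge0.
exists (2 * M / r%:num); split; first by apply: divr_ge0 => //; lra.
move=> x; have [->|x0n] := eqVneq x 0.
  by case: Hnrm => _ [hz _]; rewrite normr0 mulr0 -(scale0r (0 : X)) hz normr0 mul0r.
have xp : 0 < `|x| by rewrite normr_gt0.
set t := r%:num / (2 * `|x|).
have tp : 0 < t by apply: divr_gt0 => //; lra.
have rp : 0 < r%:num by [].
have hwx : `|t *: x| < r%:num.
  rewrite normrZ gtr0_norm //.
  have -> : t * `|x| = r%:num / 2 by rewrite /t; field; rewrite gt_eqF.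
  lra.
have hle := hM _ hwx.
case: Hnrm => _ [hz _].
have eqx : Hnorm p H (t^-1 *: (t *: x)) = t^-1 * Hnorm p H (t *: x).
  by rewrite hz gtr0_norm ?invr_gt0.
rewrite scalerA mulVf ?gt_eqF // scale1r in eqx.
rewrite eqx.
have -> : 2 * M / r%:num * `|x| = t^-1 * M by rewrite /t invf_div; field; rewrite gt_eqF.
by rewrite ler_pM2l // invr_gt0.
Qed.

Lemma qE : p / (p - 1) = 1 + (p - 1)^-1.
Proof. have := p1 => ?; field; lra. Qed.

Lemma qgt0 : 0 < p / (p - 1).
Proof. have := p1 => ?; apply: divr_gt0; lra. Qed.

Lemma conj_pq : (p / (p - 1))^-1 + p^-1 = 1.
Proof. have := p1 => ?; field; lra. Qed.

Lemma lam_pow (lam : R) : 0 < lam ->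
  lam * (lam `^ (1 - p / (p - 1))) `^ p = lam `^ (1 - p / (p - 1)).
Proof.
move=> l0; have := p1 => ?.
rewrite -powRrM -{1}(powRr1 (ltW l0)) -powRD; last by apply/implyP => _; exact: lt0r_neq0.
congr (_ `^ _); field; lra.
Qed.

Lemma lam_powq (lam : R) : 0 < lam ->
  lam `^ (1 - p / (p - 1)) * lam `^ (p / (p - 1)) = lam.
Proof.
move=> l0; rewrite -powRD; last by apply/implyP => _; exact: lt0r_neq0.
by rewrite subrK powRr1 // ltW.
Qed.

Lemma half_pow : 2^-1 `^ p < 2^-1 :> R.
Proof.
have := p1 => ?.
have -> : p = 1 + (p - 1) by ring.
rewrite powRD; last by apply/implyP => _; rewrite invr_neq0.
rewrite powRr1 ?invr_ge0 // gtr_pMr ?invr_gt0 //.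
rewrite /powR gt_eqF ?invr_gt0 // expR_lt1 pmulr_rlt0; last lra.
by apply: ln_lt0; apply/andP; split; [rewrite invr_gt0 | rewrite invf_lt1 //; lra].
Qed.

Lemma fenchelH_ge0 (z : X -> R) : is_dual z -> (0 <= fenchel H z)%E.
Proof.
move=> [lz _]; apply: ereal_sup_ubound; exists 0 => //.
by rewrite (lin0 lz) [H 0]HE h0 sube0.
Qed.

Lemma dir1 (J : X -> \bar R) (lam : R) : 0 < lam ->
  (forall u, (lam%:E * H u <= J u)%E) ->
  forall z, is_dual z ->
    (fenchel J z <= (lam `^ (1 - p / (p - 1)))%:E * fenchel H z)%E.
Proof.
move=> l0 hJ z [lz _].
set s := lam `^ (1 - p / (p - 1)).
have s0 : 0 < s by exact: powR_gt0.
apply: ge_ereal_sup => _ [u _ <-].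
set w := s^-1 *: u.
have uw : u = s *: w by rewrite /w scalerA mulfV ?scale1r // gt_eqF.
have ub : ((z w - fine (H w))%:E <= fenchel H z)%E.
  by apply: ereal_sup_ubound; exists w => //; rewrite [H w]HE.
have : ((s * (z w - fine (H w)))%:E <= s%:E * fenchel H z)%E.
  by rewrite EFinM lee_wpmul2l // lee_fin ltW.
apply: le_trans.
have := hJ u; rewrite [H u]HE.
case: (J u) => [j| |] /=; last 2 first.
- by move=> _; rewrite addeNy leNye.
- by rewrite -EFinM leeNy_eq.
rewrite -EFinM -EFinD !lee_fin => hj.
have hu : fine (H u) = s `^ p * fine (H w) by rewrite uw hhom gtr0_norm.
have zu : z u = s * z w by rewrite uw (linZ lz).
have := lam_pow l0; rewrite -/s => ls.
rewrite hu mulrA ls in hj.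
rewrite zu; lra.
Qed.


Lemma dir2 (J : X -> \bar R) (lam : R) : 0 < lam ->
  (forall u, (-oo < J u)%E) ->
  (exists c : R, (0 < c)%R /\ forall u, (H u <= c%:E * J u)%E) ->
  (forall z, is_dual z ->
    (fenchel J z <= (lam `^ (1 - p / (p - 1)))%:E * fenchel H z)%E) ->
  forall u, (lam%:E * H u <= J u)%E.
Proof.
move=> l0 Jp [c [c0 gr]] hz u.
have [->|u0] := eqVneq u 0.
  rewrite [H 0]HE h0 mule0; have := gr 0; rewrite [H 0]HE h0 pmule_rge0 ?lte_fin //.
have [nrm0 [NZ ND]] := Hnrm.
set N := Hnorm p H.
have [f [lf fu fle]] := hahn_banach NZ ND u.
have [K [K0 hK]] := Hnorm_bound.
have fb : forall x, `|f x| <= K * `|x|.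
  move=> x; apply: le_trans (hK x); rewrite ler_norml fle andbT.
  have := fle (- x); rewrite -scaleN1r (linZ lf) NZ normrN normr1 !mul1r; lra.
have n0 : 0 < N u.
  rewrite lt_def Hnorm_ge0 andbT; apply/eqP => h; move/eqP: u0; apply; exact: nrm0.
set n := N u.
set a := lam * n `^ (p - 1).
have a0 : 0 <= a by apply: mulr_ge0; [exact: ltW | exact: powR_ge0].
set z := fun v => a * f v.
have lz : forall (b : R) x y, z (b *: x + y) = b * z x + z y.
  by move=> b x y; rewrite /z lf; ring.
have dz : is_dual z.
  apply: (@bounded_lin_dual _ _ _ (a * K)) => //; first exact: mulr_ge0.
  by move=> x; rewrite /z normrM ger0_norm // -mulrA ler_wpM2l.
have hle := hz z dz.
have lb : ((z u)%:E - J u <= fenchel J z)%E by apply: ereal_sup_ubound; exists u.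
have q0 := qgt0.
have ub : (fenchel H z <= (a `^ (p / (p - 1)) / (p / (p - 1)))%:E)%E.
  apply: ge_ereal_sup => _ [v _ <-]; rewrite [H v]HE -EFinB lee_fin.
  have hv : fine (H v) = N v `^ p / p by rewrite Hnorm_pow; field; exact: pneq0.
  have y := conjugate_powR a0 (Hnorm_ge0 v) q0 pgt0 conj_pq.
  have : z v <= a * N v by rewrite /z ler_wpM2l.
  rewrite -/N in y; rewrite hv; lra.
have s0 : (0 <= (lam `^ (1 - p / (p - 1)))%:E)%E by rewrite lee_fin powR_ge0.
have := le_trans lb (le_trans hle (lee_wpmul2l s0 ub)).
rewrite [H u]HE.
move: (Jp u); case: (J u) => [j| |] // _; last by rewrite leey.
rewrite -EFinM -EFinB -EFinM !lee_fin.
rewrite /z fu -/n /a.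
rewrite /n => hh.
exact: (@final_alg R p lam (N u) (fine (H u)) j p1 l0 (Hnorm_ge0 u) (Hnorm_pow u) hh).
Qed.


Lemma lamH_all (J : X -> \bar R) (lam : R) :
  (exists c : R, (0 < c)%R /\ forall u, (H u <= c%:E * J u)%E) ->
  (forall u : X, u <> 0 -> (lam%:E <= rayleigh J H u)%E) ->
  forall u, (lam%:E * H u <= J u)%E.
Proof.
move=> [c [c0 gr]] mn u.
have [->|u0] := eqVneq u 0.
  rewrite [H 0]HE h0 mule0; have := gr 0; rewrite [H 0]HE h0 pmule_rge0 ?lte_fin //.
have hu := hpos u0.
have u0' : u <> 0 by apply/eqP.
have := mn u u0'; rewrite /rayleigh => hr.
have hu0 : (0 <= (fine (H u))%:E)%E by rewrite lee_fin ltW.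
have := lee_wpmul2r hu0 hr.
rewrite -muleA -[X in (_ <= J u * X)%E]EFinM mulVf ?gt_eqF // mule1 [H u]HE -EFinM //.
Qed.

Lemma part2b (J : X -> \bar R) (lam : R) : 0 < lam ->
  (forall u, (lam%:E * H u <= J u)%E) ->
  forall z, is_dual z ->
  (dual_rayleigh J H z <= (lam `^ (1 - p / (p - 1)))%:E)%E.
Proof.
move=> l0 hJ z dz.
have hle := dir1 l0 hJ dz.
have hge := fenchelH_ge0 dz.
rewrite /dual_rayleigh.
have s0 : 0 < lam `^ (1 - p / (p - 1)) by exact: powR_gt0.
move: hle hge; case: (fenchel H z) => [r| |] //; last first.
  by move=> _ _; rewrite invey mule0 lee_fin ltW.
move=> hle; rewrite lee_fin le_eqVlt => /predU1P[r0|r0].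
  rewrite -r0 mule0 in hle; rewrite -r0 inve0.
  move: hle; case: (fenchel J z) => [a| |] //.
    rewrite lee_fin le_eqVlt => /predU1P[->|a0]; first by rewrite mul0e lee_fin ltW.
    by rewrite lt0_muley ?lte_fin // leNye.
  by move=> _; rewrite mulNyy leNye.
rewrite inver gt_eqF //.
move: hle; case: (fenchel J z) => [a| |] //.
  rewrite -EFinM -EFinM !lee_fin => ha.
  by rewrite ler_pdivrMr.
by move=> _; rewrite mulNyr gtr0_sg ?invr_gt0 // mul1e leNye.
Qed.


Lemma part2a (J : X -> \bar R) (lam : R) (us : X) (zs : X -> R) : 0 < lam ->
  (forall v, (-oo < J v)%E) ->
  p_eigenvector J H us zs lam ->
  dual_rayleigh J H zs = (lam `^ (1 - p / (p - 1)))%:E.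
Proof.
move=> l0 Jp [u0 [[dzs sJ] [ray [eta [[deta sH] zsE]]]]].
have u0' : us != 0 by apply/eqP.
have hu := hpos u0'.
have leta := deta.1.
have Ju : J us = (lam * fine (H us))%:E.
  move: ray (Jp us); rewrite /rayleigh; case: (J us) => [j| |] //.
    rewrite -EFinM => h _; have hj : j * (fine (H us))^-1 = lam by apply: EFin_inj.
    by rewrite -hj -mulrA mulVf ?mulr1 // gt_eqF.
  by rewrite mulyr gtr0_sg ?invr_gt0 // mul1e.
have zsF : zs = fun v => lam * eta v by apply: funext.
have d0 : 0 < eta us - fine (H us).
  have := sH (2^-1 *: us); rewrite [H us]HE [H (2^-1 *: us)]HE -EFinD lee_fin hhom (linZ leta).
  rewrite gtr0_norm ?invr_gt0 //; apply: alg_eta => //; exact: half_pow.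
have FJ : fenchel J zs = (lam * eta us - lam * fine (H us))%:E.
  apply/eqP; rewrite eq_le; apply/andP; split.
    apply: ge_ereal_sup => _ [v _ <-].
    have := sJ v; rewrite Ju zsF /=.
    move: (Jp v); case: (J v) => [jv| |] //.
      by rewrite -EFinD lee_fin => _ h; rewrite -EFinB lee_fin; exact: alg_lin.
    by move=> _ _; rewrite addeNy leNye.
  by apply: ereal_sup_ubound; exists us => //; rewrite zsF Ju -EFinB.
have [e1 e2] := @alg_qpow R p lam p1 l0.
set r := lam `^ (p - 1)^-1.
have r0 : 0 < r by exact: powR_gt0.
have FH : fenchel H zs = (lam `^ (p / (p - 1)) * (eta us - fine (H us)))%:E.
  apply/eqP; rewrite eq_le; apply/andP; split.
    apply: ge_ereal_sup => _ [v _ <-]; rewrite zsF [H v]HE -EFinB lee_fin.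
    set w := r^-1 *: v.
    have vw : v = r *: w by rewrite /w scalerA mulfV ?scale1r // gt_eqF.
    rewrite vw (linZ leta) hhom gtr0_norm // mulrA e1 e2 -mulrBr.
    rewrite ler_wpM2l ?powR_ge0 //.
    by have := sH w; rewrite [H us]HE [H w]HE -EFinD lee_fin; exact: alg_lin.
  apply: ereal_sup_ubound; exists (r *: us) => //.
  by rewrite zsF [H _]HE (linZ leta) hhom gtr0_norm // mulrA e1 e2 -EFinB -mulrBr.
rewrite /dual_rayleigh FJ FH inver gt_eqF; last by apply: mulr_gt0 => //; exact: powR_gt0.
rewrite -EFinM -mulrBr; congr EFin; exact: alg_2a.
Qed.

End Hfacts.

Unset Implicit Arguments.
Local Open Scope classical_set_scope.
Local Open Scope ring_scope.
Local Open Scope ereal_scope.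

Theorem lemma2p2 (R : realType) (X : completeNormedModType R)
  (p : R) (J H : X -> \bar R) (lam : R) :
  reflexive_space (X := X) ->
  (1 < p)%R ->
  Gamma0 J -> Gamma0 H ->
  abs_p_homogeneous p H ->
  (forall u, H u \is a fin_num) ->
  is_norm (Hnorm p H) ->
  (exists c : R, (0 < c)%R /\ forall u, H u <= c%:E * J u) ->
  (0 < lam)%R ->
  let q := (p / (p - 1))%R in
  ((forall u : X, lam%:E * H u <= J u) <->
   (forall z : X -> R, is_dual z ->
      fenchel J z <= (lam `^ (1 - q))%:E * fenchel H z)) /\
  (forall (us : X) (zs : X -> R),
     p_eigenvector J H us zs lam ->
     (forall u : X, u <> 0%R -> lam%:E <= rayleigh J H u) ->
     dual_rayleigh J H zs = (lam `^ (1 - q))%:E /\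
     (forall z : X -> R, is_dual z -> z <> (fun _ => 0%R) ->
        dual_rayleigh J H z <= (lam `^ (1 - q))%:E)).

Proof.
move=> refl p1 JG HG Hhom Hfin Hnrm gr l0 q.
have Jp : forall u, (-oo < J u)%E := JG.1.2.
split.
  split.
  - by move=> hJ z dz; apply: (@dir1 _ _ p H).
  - by move=> hz; apply: (@dir2 _ _ p H).
- move=> us zs eig mn; split.
  + by apply: (@part2a _ _ p H); eassumption.
  + by move=> z dz _; apply: (@part2b _ _ p H) => //; apply: (@lamH_all _ _ p H).
Qed.
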